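(* Let $X$ be a non-empty set, $\alpha$ an equivalence relation on $X$, and $f,g\in\mathcal T_X(\alpha)$. Then in the semigroup $\mathcal T_X(\alpha)$: (i) $f\,\mathscr L\,g$ iff $\operatorname{im}(f)=\operatorname{im}(g)$; (ii) $f\,\mathscr R\,g$ iff $f=g$, or $\ker(f)=\ker(g)$ and $\alpha$ separates both $\operatorname{im}(f)$ and $\operatorname{im}(g)$; (iii) $f\,\mathscr H\,g$ iff $f=g$, or $\ker(f)=\ker(g)$ and $\alpha$ separates $\operatorname{im}(f)=\operatorname{im}(g)$; (iv) $f\,\mathscr D\,g$ iff $\operatorname{im}(f)=\operatorname{im}(g)$, or $\operatorname{rank}(f)=\operatorname{rank}(g)$ and $\alpha$ separates both $\operatorname{im}(f)$ and $\operatorname{im}(g)$; (v) $f\,\mathscr J\,g$ iff $\operatorname{im}(f)=\operatorname{im}(g)$ or $\|\alpha f^{-1}\|=\operatorname{rank}(f)=\operatorname{rank}(g)=\|\alpha g^{-1}\|$. Further, $\mathscr D=\mathscr J$ in $\mathcal T_X(\alpha)$ if and only if $\|\alpha\|$ is finite or $\alpha=\Delta$.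
   Context: $\mathcal T_X$ is the semigroup of all maps $X\to X$ (written on the right, composed left to right). $\mathcal T_X(\alpha)=\{f\in\mathcal T_X:\ker(f)\supseteq\alpha\}$, where $\ker(f)=\{(x,y):xf=yf\}$. $\operatorname{rank}(f)=|\operatorname{im}(f)|$. $\|\sigma\|$ denotes the number of classes of an equivalence $\sigma$; $\alpha f^{-1}=\{(x,y):(xf,yf)\in\alpha\}$; $\Delta=\{(x,x):x\in X\}$. An equivalence $\sigma$ separates a set $B$ if each $\sigma$-class contains at most one element of $B$. Green's relations are computed within $\mathcal T_X(\alpha)$. *)

(* Defs.v *)
From Stdlib Require Import List RelationClasses.

Set Implicit Arguments.

Section Defs.
Variable X : Type.

(* Maps are written on the right: x (f * g) = (x f) g. *)
Definition tmul (f g : X -> X) : X -> X := fun x => g (f x).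

Definition TXa (alpha : X -> X -> Prop) (f : X -> X) : Prop :=
  forall x y, alpha x y -> f x = f y.

(* Principal ideal preorders in S = T_X(alpha), using S^1. *)
Definition leqL alpha (f g : X -> X) : Prop :=
  f = g \/ exists u, TXa alpha u /\ f = tmul u g.
Definition leqR alpha (f g : X -> X) : Prop :=
  f = g \/ exists v, TXa alpha v /\ f = tmul g v.
Definition leqJ alpha (f g : X -> X) : Prop :=
  f = g
  \/ (exists u, TXa alpha u /\ f = tmul u g)
  \/ (exists v, TXa alpha v /\ f = tmul g v)
  \/ (exists u v, TXa alpha u /\ TXa alpha v /\ f = tmul (tmul u g) v).

Definition GreenL alpha f g := leqL alpha f g /\ leqL alpha g f.
Definition GreenR alpha f g := leqR alpha f g /\ leqR alpha g f.
Definition GreenH alpha f g := GreenL alpha f g /\ GreenR alpha f g.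
Definition GreenD alpha f g :=
  exists h, TXa alpha h /\ GreenL alpha f h /\ GreenR alpha h g.
Definition GreenJ alpha f g := leqJ alpha f g /\ leqJ alpha g f.

Definition im (f : X -> X) : X -> Prop := fun y => exists x, f x = y.
Definition same_im (f g : X -> X) : Prop := forall y, im f y <-> im g y.
Definition same_ker (f g : X -> X) : Prop :=
  forall x y, f x = f y <-> g x = g y.

Definition separates (sigma : X -> X -> Prop) (B : X -> Prop) : Prop :=
  forall a b, B a -> B b -> sigma a b -> a = b.

Definition preimrel (alpha : X -> X -> Prop) (f : X -> X) : X -> X -> Prop :=
  fun x y => alpha (f x) (f y).

Definition classes (sigma : X -> X -> Prop) : Type :=
  { C : X -> Prop | exists x, forall y, C y <-> sigma x y }.

(* the subtype of image elements; rank f = cardinality of imset f *)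
Definition imset (f : X -> X) : Type := { y : X | im f y }.

End Defs.

Definition bijective_map (A B : Type) (h : A -> B) : Prop :=
  (forall a1 a2, h a1 = h a2 -> a1 = a2) /\ (forall b, exists a, h a = b).
Definition equipotent (A B : Type) : Prop := exists h : A -> B, bijective_map h.

Definition finite_type (T : Type) : Prop := exists l : list T, forall t, In t l.

(* Main.v *)
Require Import Defs.
From Stdlib Require Import List RelationClasses Lia.
From Stdlib Require Import Classical ClassicalEpsilon FunctionalExtensionality PropExtensionality ProofIrrelevance FinFun.

Definition inj (A B : Type) : Prop := exists h : A -> B, forall a1 a2, h a1 = h a2 -> a1 = a2.

Lemma eqp_inj A B : equipotent A B -> inj A B.
Proof. intros [h [H1 H2]]. exists h; exact H1. Qed.

Lemma inj_trans A B C : inj A B -> inj B C -> inj A C.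
Proof. intros [h Hh] [k Hk]. exists (fun a => k (h a)). intros; auto. Qed.

Lemma inj_refl A : inj A A.
Proof. exists (fun a => a); auto. Qed.

Lemma eqp_sym A B : equipotent A B -> equipotent B A.
Proof.
  intros [h [H1 H2]].
  exists (fun b => proj1_sig (constructive_indefinite_description _ (H2 b))).
  split.
  - intros b1 b2 E.
    destruct (constructive_indefinite_description _ (H2 b1)) as [a1 e1].
    destruct (constructive_indefinite_description _ (H2 b2)) as [a2 e2].
    simpl in E. subst. reflexivity.
  - intros a. exists (h a).
    destruct (constructive_indefinite_description _ (H2 (h a))) as [a1 e1]. simpl; auto.
Qed.

Lemma eqp_trans A B C : equipotent A B -> equipotent B C -> equipotent A C.
Proof.
  intros [h [H1 H2]] [k [K1 K2]]. exists (fun a => k (h a)). split.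
  - intros; auto.
  - intros c. destruct (K2 c) as [b Hb]. destruct (H2 b) as [a Ha]. exists a. subst; auto.
Qed.

Section SBsec.
Lemma SB A B : inj A B -> inj B A -> equipotent A B.
Proof.
  intros [f Hf] [g Hg].
  set (s := fun a => g (f a)).
  set (C := fun a => exists n a0, (~ exists b, g b = a0) /\ a = Nat.iter n s a0).
  set (ginv := fun a => match excluded_middle_informative (exists b, g b = a) with
                        | left p => proj1_sig (constructive_indefinite_description _ p)
                        | right _ => f a end).
  assert (Gi : forall a, (exists b, g b = a) -> g (ginv a) = a).
  { intros a p. unfold ginv. destruct (excluded_middle_informative _) as [q|q].
    - destruct (constructive_indefinite_description _ q); simpl; auto.
    - contradiction. }
  assert (NC : forall a, ~ C a -> exists b, g b = a).
  { intros a Hn. apply NNPP. intro Hn2. apply Hn. exists 0, a. split; auto. }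
  exists (fun a => match excluded_middle_informative (C a) with
                   | left _ => f a | right _ => ginv a end).
  split.
  - intros a1 a2.
    destruct (excluded_middle_informative (C a1)) as [c1|c1];
    destruct (excluded_middle_informative (C a2)) as [c2|c2]; intro E.
    + auto.
    + exfalso. apply c2. destruct c1 as [n [a0 [H0 H1]]].
      exists (S n), a0. split; auto. simpl. rewrite <- H1.
      unfold s. rewrite E. symmetry. apply Gi, NC, c2.
    + exfalso. apply c1. destruct c2 as [n [a0 [H0 H1]]].
      exists (S n), a0. split; auto. simpl. rewrite <- H1.
      unfold s. rewrite <- E. symmetry. apply Gi, NC, c1.
    + rewrite <- (Gi a1 (NC _ c1)), <- (Gi a2 (NC _ c2)), E. reflexivity.
  - intros b.
    destruct (excluded_middle_informative (C (g b))) as [c|c].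
    + destruct c as [n [a0 [H0 H1]]]. destruct n as [|m].
      * simpl in H1. exfalso. apply H0. exists b. auto.
      * simpl in H1. unfold s in H1. apply Hg in H1.
        exists (Nat.iter m s a0).
        destruct (excluded_middle_informative (C (Nat.iter m s a0))) as [c'|c'].
        -- auto.
        -- exfalso. apply c'. exists m, a0. auto.
    + exists (g b).
      destruct (excluded_middle_informative (C (g b))) as [c'|c']; [contradiction|].
      apply Hg. apply Gi. exists b; auto.
Qed.
End SBsec.

Lemma sig_ext A (P : A -> Prop) (u v : sig P) : proj1_sig u = proj1_sig v -> u = v.
Proof. destruct u as [u pu], v as [v pv]; simpl; intro; subst; f_equal; apply proof_irrelevance. Qed.

Definition mkcls {X} (R : X -> X -> Prop) (x : X) : classes R :=
  exist _ (fun y => R x y) (ex_intro _ x (fun y => iff_refl _)).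

Lemma mkcls_eq {X} (R : X -> X -> Prop) (HR : Equivalence R) x y : R x y -> mkcls R x = mkcls R y.
Proof.
  intro H. apply sig_ext; simpl. apply functional_extensionality; intro z.
  apply propositional_extensionality. split; intro.
  - transitivity x; auto. symmetry; auto.
  - transitivity y; auto.
Qed.

Lemma mkcls_inv {X} (R : X -> X -> Prop) (HR : Equivalence R) x y : mkcls R x = mkcls R y -> R x y.
Proof.
  intro H. apply (f_equal (@proj1_sig _ _)) in H. simpl in H.
  apply (f_equal (fun P => P y)) in H. rewrite H. reflexivity.
Qed.

Lemma mkcls_surj {X} {R : X -> X -> Prop} (C : classes R) : exists x, C = mkcls R x.
Proof.
  destruct C as [C [x Hx]]. exists x. apply sig_ext; simpl.
  apply functional_extensionality; intro z. apply propositional_extensionality. apply Hx.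
Qed.

Definition wit {X} {R : X -> X -> Prop} (C : classes R) : X :=
  proj1_sig (constructive_indefinite_description _ (mkcls_surj C)).

Lemma wit_spec {X} {R : X -> X -> Prop} (C : classes R) : mkcls R (wit C) = C.
Proof. unfold wit. destruct (constructive_indefinite_description _ _); simpl; auto. Qed.

Lemma preim_equiv {X} (alpha : X -> X -> Prop) (Ha : Equivalence alpha) f : Equivalence (preimrel alpha f).
Proof.
  unfold preimrel; split.
  - intro; reflexivity.
  - intros x y H; symmetry; auto.
  - intros x y z H1 H2; transitivity (f y); auto.
Qed.

Definition imx {X} (f : X -> X) (x : X) : imset f := exist _ (f x) (ex_intro _ x eq_refl).

Definition psi {X} (alpha : X -> X -> Prop) (f : X -> X) (s : imset f) : classes (preimrel alpha f) :=
  mkcls _ (proj1_sig (constructive_indefinite_description _ (proj2_sig s))).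

Lemma psi_surj {X} alpha (Ha : Equivalence alpha) (f : X -> X) C : exists s, psi alpha f s = C.
Proof.
  destruct (mkcls_surj C) as [x Hx]. subst. exists (imx f x).
  unfold psi, imx; simpl. destruct (constructive_indefinite_description _ _) as [z Hz]; simpl.
  apply mkcls_eq. apply preim_equiv; auto. unfold preimrel. rewrite Hz. reflexivity.
Qed.

Lemma psi_eq {X} alpha (Ha : Equivalence alpha) (f : X -> X) s1 s2 :
  psi alpha f s1 = psi alpha f s2 <-> alpha (proj1_sig s1) (proj1_sig s2).
Proof.
  unfold psi. destruct s1 as [y1 p1], s2 as [y2 p2]; simpl.
  destruct (constructive_indefinite_description _ p1) as [x1 e1].
  destruct (constructive_indefinite_description _ p2) as [x2 e2]; simpl.
  split; intro H.
  - apply mkcls_inv in H; [|apply preim_equiv; auto]. unfold preimrel in H. subst; auto.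
  - apply mkcls_eq; [apply preim_equiv; auto|]. unfold preimrel. subst; auto.
Qed.

Lemma c_le_r {X} alpha (Ha : Equivalence alpha) (f : X -> X) : inj (classes (preimrel alpha f)) (imset f).
Proof.
  exists (fun C => imx f (wit C)). intros C1 C2 E.
  unfold imx in E. apply (f_equal (@proj1_sig _ _)) in E; simpl in E.
  rewrite <- (wit_spec C1), <- (wit_spec C2). apply mkcls_eq; [apply preim_equiv; auto|].
  change (alpha (f (wit C1)) (f (wit C2))). rewrite E. reflexivity.
Qed.

Lemma sep_r_le_c {X} alpha (Ha : Equivalence alpha) (f : X -> X) :
  separates alpha (im f) -> equipotent (imset f) (classes (preimrel alpha f)).
Proof.
  intro S. exists (psi alpha f). split.
  - intros s1 s2 E. apply psi_eq in E; auto. apply sig_ext.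
    destruct s1, s2; simpl in *. apply S; auto.
  - intro C. apply psi_surj; auto.
Qed.

Lemma sub_r {X} (f g : X -> X) : (forall y, im f y -> im g y) -> inj (imset f) (imset g).
Proof.
  intro H. exists (fun s => exist _ (proj1_sig s) (H _ (proj2_sig s))).
  intros s1 s2 E. apply (f_equal (@proj1_sig _ _)) in E. apply sig_ext; auto.
Qed.

Lemma sub_c {X} alpha (Ha : Equivalence alpha) (f g : X -> X) : (forall y, im f y -> im g y) ->
  inj (classes (preimrel alpha f)) (classes (preimrel alpha g)).
Proof.
  intro H.
  exists (fun C => mkcls (preimrel alpha g)
     (proj1_sig (constructive_indefinite_description _ (H _ (ex_intro _ (wit C) eq_refl))))).
  intros C1 C2 E.
  destruct (constructive_indefinite_description _ (H _ (ex_intro _ (wit C1) eq_refl))) as [z1 e1].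
  destruct (constructive_indefinite_description _ (H _ (ex_intro _ (wit C2) eq_refl))) as [z2 e2].
  simpl in E. apply mkcls_inv in E; [|apply preim_equiv; auto]. unfold preimrel in E.
  rewrite e1, e2 in E.
  rewrite <- (wit_spec C1), <- (wit_spec C2). apply mkcls_eq; [apply preim_equiv; auto|]. exact E.
Qed.

Lemma sameim_eqp {X} (f g : X -> X) : same_im f g -> equipotent (imset f) (imset g).
Proof.
  intro H. apply SB; apply sub_r; intros y; apply H.
Qed.

Lemma sameker_eqp {X} (f g : X -> X) : same_ker f g -> equipotent (imset f) (imset g).
Proof.
  intro K.
  exists (fun s : imset f => imx g (proj1_sig (constructive_indefinite_description (fun x => f x = proj1_sig s) (proj2_sig s)))).
  split.
  - intros [y1 p1] [y2 p2]; simpl.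
    destruct (constructive_indefinite_description _ p1) as [x1 e1].
    destruct (constructive_indefinite_description _ p2) as [x2 e2]; simpl.
    intro E. apply (f_equal (@proj1_sig _ _)) in E; simpl in E.
    apply sig_ext; simpl. subst. apply K; auto.
  - intros [y [x e]]. exists (imx f x). apply sig_ext; simpl.
    destruct (constructive_indefinite_description _ _) as [z ez]; simpl.
    subst. apply K; auto.
Qed.

Lemma L_build {X} (alpha : X -> X -> Prop) (f g : X -> X) : TXa alpha f ->
  (forall y, im f y -> im g y) -> exists u, TXa alpha u /\ f = tmul u g.
Proof.
  intros Tf H.
  set (pickg := fun y => match excluded_middle_informative (im g y) with
                | left p => proj1_sig (constructive_indefinite_description _ p)
                | right _ => y end).
  exists (fun x => pickg (f x)). split.
  - intros x y Hxy. rewrite (Tf x y Hxy). reflexivity.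
  - apply functional_extensionality; intro x. unfold tmul, pickg.
    destruct (excluded_middle_informative (im g (f x))) as [p|p].
    + destruct (constructive_indefinite_description _ p); simpl; auto.
    + exfalso. apply p, H. exists x; auto.
Qed.

Lemma leqL_im {X} (alpha : X -> X -> Prop) (f g : X -> X) : leqL alpha f g -> forall y, im f y -> im g y.
Proof.
  intros [E|[u [Tu E]]] y [x Hx]; subst.
  - exists x; auto.
  - exists (u x); auto.
Qed.

Lemma R_build {X} (alpha : X -> X -> Prop) (Ha : Equivalence alpha) (x0 : X) (f g : X -> X) :
  same_ker f g -> separates alpha (im g) -> exists v, TXa alpha v /\ f = tmul g v.
Proof.
  intros K S.
  set (v := fun y => match excluded_middle_informative (exists x, alpha y (g x)) with
                | left p => f (proj1_sig (constructive_indefinite_description _ p))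
                | right _ => x0 end).
  exists v. split.
  - intros y y' Hy. unfold v.
    destruct (excluded_middle_informative (exists x, alpha y (g x))) as [p|p];
    destruct (excluded_middle_informative (exists x, alpha y' (g x))) as [p'|p'].
    + destruct (constructive_indefinite_description _ p) as [x1 e1].
      destruct (constructive_indefinite_description _ p') as [x2 e2]; simpl.
      apply K. apply S; try (eexists; reflexivity).
      transitivity y; [symmetry; auto|]. transitivity y'; auto.
    + exfalso. apply p'. destruct p as [x e]. exists x. transitivity y; auto. symmetry; auto.
    + exfalso. apply p. destruct p' as [x e]. exists x. transitivity y'; auto.
    + reflexivity.
  - apply functional_extensionality; intro x. unfold tmul, v.
    destruct (excluded_middle_informative (exists x', alpha (g x) (g x'))) as [p|p].
    + destruct (constructive_indefinite_description _ p) as [x1 e1]; simpl.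
      apply K. apply S; auto; eexists; reflexivity.
    + exfalso. apply p. exists x. reflexivity.
Qed.

Lemma R_nec {X} (alpha : X -> X -> Prop) (f g v w : X -> X) :
  TXa alpha v -> TXa alpha w -> f = tmul g v -> g = tmul f w ->
  same_ker f g /\ separates alpha (im g).
Proof.
  intros Tv Tw Ef Eg. split.
  - intros x y. split; intro H.
    + rewrite Eg. unfold tmul. rewrite H. reflexivity.
    + rewrite Ef. unfold tmul. rewrite H. reflexivity.
  - intros a b [x Hx] [y Hy] Hab. subst a b.
    assert (f x = f y) by (rewrite Ef; unfold tmul; apply Tv; auto).
    rewrite Eg. unfold tmul. rewrite H. reflexivity.
Qed.

Lemma J_nec_aux {X} (alpha : X -> X -> Prop) (Ha : Equivalence alpha) (f g v w : X -> X) :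
  TXa alpha v -> (forall x, f x = v (g (w x))) -> inj (imset f) (classes (preimrel alpha g)).
Proof.
  intros Tv E.
  exists (fun s : imset f => mkcls (preimrel alpha g)
     (w (proj1_sig (constructive_indefinite_description (fun x => f x = proj1_sig s) (proj2_sig s))))).
  intros [y1 p1] [y2 p2]; simpl.
  destruct (constructive_indefinite_description _ p1) as [x1 e1].
  destruct (constructive_indefinite_description _ p2) as [x2 e2]; simpl.
  intro M. apply mkcls_inv in M; [|apply preim_equiv; auto]. unfold preimrel in M.
  apply sig_ext; simpl. subst. rewrite !E. apply Tv. auto.
Qed.

Lemma J_nec {X} (alpha : X -> X -> Prop) (Ha : Equivalence alpha) (f g : X -> X) :
  leqJ alpha f g -> (forall y, im f y -> im g y) \/ inj (imset f) (classes (preimrel alpha g)).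
Proof.
  intros [E|[[u [Tu E]]|[[v [Tv E]]|[u [v [Tu [Tv E]]]]]]].
  - left. subst. auto.
  - left. intros y [x Hx]. subst. exists (u x). reflexivity.
  - right. apply (@J_nec_aux X alpha Ha f g v (fun x => x)); auto. intro x; subst; reflexivity.
  - right. apply (@J_nec_aux X alpha Ha f g v u); auto. intro x; subst; reflexivity.
Qed.

Lemma J_suff {X} (alpha : X -> X -> Prop) (Ha : Equivalence alpha) (x0 : X) (f g : X -> X) :
  TXa alpha f -> inj (imset f) (classes (preimrel alpha g)) -> leqJ alpha f g.
Proof.
  intros Tf [h Hh]. right; right; right.
  set (u := fun x => wit (h (imx f x))).
  assert (Uniq : forall y t1 t2, alpha y (g (wit (h t1))) -> alpha y (g (wit (h t2))) -> t1 = t2).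
  { intros y t1 t2 H1 H2. apply Hh. rewrite <- (wit_spec (h t1)), <- (wit_spec (h t2)).
    apply mkcls_eq; [apply preim_equiv; auto|].
    change (alpha (g (wit (h t1))) (g (wit (h t2)))). transitivity y; auto. symmetry; auto. }
  set (v := fun y => match excluded_middle_informative (exists t : imset f, alpha y (g (wit (h t)))) with
                | left p => proj1_sig (proj1_sig (constructive_indefinite_description _ p))
                | right _ => x0 end).
  exists u, v. split; [|split].
  - intros x y Hxy. unfold u. f_equal. f_equal. apply sig_ext. simpl. apply Tf; auto.
  - intros y y' Hy. unfold v.
    destruct (excluded_middle_informative (exists t : imset f, alpha y (g (wit (h t))))) as [p|p];
    destruct (excluded_middle_informative (exists t : imset f, alpha y' (g (wit (h t))))) as [p'|p'].
    + destruct (constructive_indefinite_description _ p) as [t1 e1].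
      destruct (constructive_indefinite_description _ p') as [t2 e2]; simpl.
      f_equal. apply (Uniq y); auto. transitivity y'; auto.
    + exfalso. apply p'. destruct p as [t e]. exists t. transitivity y; auto. symmetry; auto.
    + exfalso. apply p. destruct p' as [t e]. exists t. transitivity y'; auto.
    + reflexivity.
  - apply functional_extensionality; intro x. unfold tmul, v.
    destruct (excluded_middle_informative (exists t : imset f, alpha (g (u x)) (g (wit (h t))))) as [p|p].
    + destruct (constructive_indefinite_description _ p) as [t1 e1]; simpl.
      assert (t1 = imx f x) by (apply (Uniq (g (u x))); auto; unfold u; reflexivity).
      subst. reflexivity.
    + exfalso. apply p. exists (imx f x). unfold u. reflexivity.
Qed.

Arguments R_nec {X alpha f g v w}.

Lemma partL {X} (alpha : X -> X -> Prop) (f g : X -> X) : TXa alpha f -> TXa alpha g ->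
  (GreenL alpha f g <-> same_im f g).
Proof.
  intros Tf Tg. split.
  - intros [H1 H2] y. split; [apply (leqL_im _ _ _ H1)|apply (leqL_im _ _ _ H2)].
  - intro S. split; right.
    + apply L_build; auto. intro y; apply S.
    + apply L_build; auto. intro y; apply S.
Qed.

Arguments partL {X alpha f g}.

Lemma sep_im {X} (alpha : X -> X -> Prop) (f g : X -> X) : same_im f g -> separates alpha (im f) -> separates alpha (im g).
Proof. intros S H a b Ha Hb. apply H; apply S; auto. Qed.

Lemma sameker_sym {X} (f g : X -> X) : same_ker f g -> same_ker g f.
Proof. intros K x y. split; apply K. Qed.

Lemma sameim_sym {X} (f g : X -> X) : same_im f g -> same_im g f.
Proof. intros K y. split; apply K. Qed.

Lemma sameim_trans {X} (f g h : X -> X) : same_im f g -> same_im g h -> same_im f h.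
Proof. intros K1 K2 y. rewrite (K1 y). apply K2. Qed.

Lemma partR {X} (alpha : X -> X -> Prop) (Ha : Equivalence alpha) (x0 : X) (f g : X -> X) :
  TXa alpha f -> TXa alpha g ->
  (GreenR alpha f g <-> f = g \/ (same_ker f g /\ separates alpha (im f) /\ separates alpha (im g))).
Proof.
  intros Tf Tg. split.
  - intros [[E|[v [Tv Ev]]] [E'|[w [Tw Ew]]]]; auto.
    right. destruct (R_nec Tv Tw Ev Ew) as [K Sg].
    destruct (R_nec Tw Tv Ew Ev) as [_ Sf]. auto.
  - intros [E|[K [Sf Sg]]].
    + subst. split; left; auto.
    + split; right.
      * apply R_build; auto.
      * apply R_build; auto. apply sameker_sym; auto.
Qed.

Arguments partR {X alpha} Ha x0 {f g}.

Lemma partH {X} (alpha : X -> X -> Prop) (Ha : Equivalence alpha) (x0 : X) (f g : X -> X) :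
  TXa alpha f -> TXa alpha g ->
  (GreenH alpha f g <-> f = g \/ (same_ker f g /\ same_im f g /\ separates alpha (im f))).
Proof.
  intros Tf Tg. unfold GreenH. rewrite (partL Tf Tg), (partR Ha x0 Tf Tg). split.
  - intros [S [E|[K [Sf Sg]]]]; auto.
  - intros [E|[K [S Sf]]].
    + subst. split; auto. intro; tauto.
    + split; auto. right. split; auto. split; auto. eapply sep_im; eauto.
Qed.

Lemma partD {X} (alpha : X -> X -> Prop) (Ha : Equivalence alpha) (x0 : X) (f g : X -> X) :
  TXa alpha f -> TXa alpha g ->
  (GreenD alpha f g <-> same_im f g \/
        (equipotent (imset f) (imset g) /\ separates alpha (im f) /\ separates alpha (im g))).
Proof.
  intros Tf Tg. split.
  - intros [h [Th [HL HR]]].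
    apply (partL Tf Th) in HL. apply (partR Ha x0 Th Tg) in HR.
    destruct HR as [E|[K [Sh Sg]]].
    + subst. left; auto.
    + right. split; [|split; auto].
      * eapply eqp_trans; [apply sameim_eqp; eauto|apply sameker_eqp; auto].
      * eapply sep_im; [apply sameim_sym; eauto|auto].
  - intros [S|[E [Sf Sg]]].
    + exists g. split; auto. split.
      * apply partL; auto.
      * apply partR; auto.
    + destruct (eqp_sym _ _ E) as [phi [P1 P2]].
      set (h := fun x => proj1_sig (phi (imx g x))).
      assert (Th : TXa alpha h).
      { intros x y Hxy. unfold h. f_equal. f_equal. apply sig_ext; simpl. apply Tg; auto. }
      assert (Sim : same_im f h).
      { intro y. split.
        - intro p. destruct (P2 (exist _ y p)) as [[z [x Hx]] Hz]. subst z.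
          exists x. unfold h. transitivity (proj1_sig (exist (im f) y p)); [f_equal; exact Hz|reflexivity].
        - intros [x Hx]. subst. unfold h. exact (proj2_sig (phi (imx g x))). }
      exists h. split; auto. split.
      * apply partL; auto.
      * apply partR; auto. right. split; [|split; auto].
        -- intros x y. unfold h. split; intro E1.
           ++ apply sig_ext in E1. apply P1 in E1. apply (f_equal (@proj1_sig _ _)) in E1. exact E1.
           ++ do 2 f_equal. apply sig_ext. exact E1.
        -- eapply sep_im; eauto.
Qed.

Arguments c_le_r {X alpha} Ha f.
Arguments J_nec {X alpha} Ha {f g}.
Arguments sub_c {X alpha} Ha {f g}.
Arguments sub_r {X f g}.
Arguments J_suff {X alpha} Ha x0 {f g}.

Lemma partJ {X} (alpha : X -> X -> Prop) (Ha : Equivalence alpha) (x0 : X) (f g : X -> X) :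
  TXa alpha f -> TXa alpha g ->
  (GreenJ alpha f g <->
        same_im f g \/
        (equipotent (classes (preimrel alpha f)) (imset f)
         /\ equipotent (imset f) (imset g)
         /\ equipotent (imset g) (classes (preimrel alpha g)))).
Proof.
  intros Tf Tg.
  pose proof (c_le_r Ha f) as Cf. pose proof (c_le_r Ha g) as Cg.
  split.
  - intros [J1 J2].
    destruct (J_nec Ha J1) as [S1|I1]; destruct (J_nec Ha J2) as [S2|I2].
    + left. intro y; split; auto.
    + pose proof (sub_r S1) as R1. pose proof (sub_c Ha S1) as K1.
      right. split; [|split]; apply SB; eauto using inj_trans.
    + pose proof (sub_r S2) as R2. pose proof (sub_c Ha S2) as K2.
      right. split; [|split]; apply SB; eauto using inj_trans.
    + right. split; [|split]; apply SB; eauto using inj_trans.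
  - intros [S|[E1 [E2 E3]]].
    + split; right; left.
      * apply L_build; auto. intro y; apply S.
      * apply L_build; auto. intro y; apply S.
    + split; apply J_suff; auto.
      * eapply inj_trans; apply eqp_inj; eauto.
      * eapply inj_trans; apply eqp_inj; apply eqp_sym; eauto.
Qed.

Lemma inj_finite A B (a0 : A) : inj A B -> finite_type B -> finite_type A.
Proof.
  intros [h Hh] [l Hl].
  set (hinv := fun b => match excluded_middle_informative (exists a, h a = b) with
                | left p => proj1_sig (constructive_indefinite_description _ p)
                | right _ => a0 end).
  exists (map hinv l). intro a.
  replace a with (hinv (h a)).
  - apply in_map. apply Hl.
  - unfold hinv. destruct (excluded_middle_informative (exists a', h a' = h a)) as [p|p].
    + destruct (constructive_indefinite_description _ p); simpl; auto.
    + exfalso; apply p; eauto.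
Qed.

Lemma fin_sep {X} (alpha : X -> X -> Prop) (Ha : Equivalence alpha) (x0 : X) (f : X -> X) :
  finite_type (classes alpha) -> equipotent (classes (preimrel alpha f)) (imset f) ->
  separates alpha (im f).
Proof.
  intros Fin [e [E1 E2]].
  assert (Fc : finite_type (classes (preimrel alpha f))).
  { apply (inj_finite _ (classes alpha) (mkcls _ x0)); auto.
    exists (fun C => mkcls alpha (f (wit C))). intros C1 C2 E.
    apply mkcls_inv in E; auto.
    rewrite <- (wit_spec C1), <- (wit_spec C2). apply mkcls_eq; [apply preim_equiv; auto|].
    exact E. }
  set (sigma := fun C => psi alpha f (e C)).
  assert (Ssurj : Surjective sigma).
  { intro C. destruct (psi_surj _ Ha f C) as [s Hs]. destruct (E2 s) as [c Hc].
    exists c. unfold sigma. rewrite Hc; auto. }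
  assert (Sinj : Injective sigma).
  { apply (Endo_Injective_Surjective Fc); auto. intros x y. apply classic. }
  intros a b [x Hx] [y Hy] Hab.
  destruct (E2 (imx f x)) as [c1 Hc1]. destruct (E2 (imx f y)) as [c2 Hc2].
  assert (sigma c1 = sigma c2).
  { unfold sigma. rewrite Hc1, Hc2. apply psi_eq; auto. simpl. subst; auto. }
  apply Sinj in H. subst c2. rewrite Hc1 in Hc2. apply (f_equal (@proj1_sig _ _)) in Hc2.
  simpl in Hc2. subst; auto.
Qed.

Lemma seq_exists {X} (alpha : X -> X -> Prop) (Ha : Equivalence alpha) (a : X) :
  ~ finite_type (classes alpha) ->
  exists r : nat -> X, r 0 = a /\ (forall n m, alpha (r n) (r m) -> n = m).
Proof.
  intro NF.
  assert (step : forall l : list X, exists z, forall w, In w l -> ~ alpha z w).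
  { intro l. apply NNPP. intro H. apply NF. exists (map (mkcls alpha) l). intro C.
    destruct (mkcls_surj C) as [x Hx]. subst.
    apply NNPP. intro Hn. apply H. exists x. intros w Hw Hxw. apply Hn.
    rewrite (mkcls_eq _ Ha _ _ Hxw). apply in_map; auto. }
  set (nxt := fun l => proj1_sig (constructive_indefinite_description _ (step l))).
  assert (Hnxt : forall l w, In w l -> ~ alpha (nxt l) w).
  { intros l. unfold nxt. destruct (constructive_indefinite_description _ (step l)); simpl; auto. }
  set (L := fix L n := match n with 0 => a :: nil | S k => nxt (L k) :: L k end).
  exists (fun n => hd a (L n)). split; [reflexivity|].
  assert (Hin : forall n m, m <= n -> In (hd a (L m)) (L n)).
  { induction n as [|n IH]; intros m Hm.
    - assert (m = 0) by lia. subst. simpl. auto.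
    - destruct (PeanoNat.Nat.eq_dec m (S n)) as [E|E].
      + subst. simpl. auto.
      + simpl. right. apply IH. lia. }
  assert (key : forall n m, m < n -> ~ alpha (hd a (L n)) (hd a (L m))).
  { intros n m Hmn. destruct n as [|k]; [lia|]. simpl. apply Hnxt. apply Hin. lia. }
  intros n m H. destruct (PeanoNat.Nat.lt_total n m) as [Hl|[Hl|Hl]]; auto.
  - exfalso. apply (key m n Hl). symmetry; auto.
  - exfalso. apply (key n m Hl). auto.
Qed.

Arguments partD {X alpha} Ha x0 {f g}.
Arguments partJ {X alpha} Ha x0 {f g}.

Lemma counterex {X} (alpha : X -> X -> Prop) (Ha : Equivalence alpha) (a b : X)
  (Hab : alpha a b) (Hne : a <> b) (r : nat -> X) (Hr0 : r 0 = a)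
  (Hr : forall n m, alpha (r n) (r m) -> n = m) :
  exists f g, TXa alpha f /\ TXa alpha g /\ GreenJ alpha f g /\ ~ GreenD alpha f g.
Proof.
  set (ix := fun x => match excluded_middle_informative (exists n, alpha x (r n)) with
        | left p => Some (proj1_sig (constructive_indefinite_description _ p))
        | right _ => None end).
  assert (ix_spec : forall x n, alpha x (r n) -> ix x = Some n).
  { intros x n H. unfold ix. destruct (excluded_middle_informative _) as [p|p].
    - destruct (constructive_indefinite_description _ p) as [m Hm]; simpl. f_equal.
      apply Hr. transitivity x; auto. symmetry; auto.
    - exfalso; eauto. }
  assert (ix_none : forall x, ix x = None -> forall n, ~ alpha x (r n)).
  { intros x H n Hn. rewrite (ix_spec x n Hn) in H. discriminate. }
  assert (ix_inv : forall x y, alpha x y -> ix x = ix y).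
  { intros x y H. destruct (ix y) as [n|] eqn:E.
    - unfold ix in E. destruct (excluded_middle_informative _) as [p|p]; [|discriminate].
      destruct (constructive_indefinite_description _ p) as [m Hm]; simpl in E. inversion E; subst.
      apply ix_spec. transitivity y; auto.
    - destruct (ix x) as [n|] eqn:E2; auto.
      unfold ix in E2. destruct (excluded_middle_informative _) as [p|p]; [|discriminate].
      destruct (constructive_indefinite_description _ p) as [m Hm]; simpl in E2.
      exfalso. apply (ix_none y E m). transitivity x; auto. symmetry; auto. }
  assert (ixr : forall n, ix (r n) = Some n) by (intro n; apply ix_spec; reflexivity).
  set (g := fun x => match ix x with Some n => r n | None => a end).
  set (f := fun x => match ix x with Some (S 0) => b | Some n => r n | None => a end).
  assert (Tf : TXa alpha f) by (intros x y H; unfold f; rewrite (ix_inv x y H); reflexivity).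
  assert (Tg : TXa alpha g) by (intros x y H; unfold g; rewrite (ix_inv x y H); reflexivity).
  assert (x0 : X) by exact a.
  assert (imf : forall y, im f y -> y = b \/ exists n, y = r n).
  { intros y [x Hx]. subst. unfold f. destruct (ix x) as [[|[|n]]|]; eauto. }
  assert (img : forall y, im g y -> y = b \/ exists n, y = r n).
  { intros y [x Hx]. subst. unfold g. destruct (ix x) as [n|]; eauto. }
  assert (bnr : forall n, b <> r n).
  { intros n E. assert (n = 0) by (apply Hr; rewrite <- E, Hr0; symmetry; auto). subst n.
    apply Hne. rewrite <- Hr0. auto. }
  assert (fr2 : forall n, f (r (S (S n))) = r (S (S n))) by (intro n; unfold f; rewrite ixr; auto).
  assert (gr : forall n, g (r n) = r n) by (intro n; unfold g; rewrite ixr; auto).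
  assert (fr1 : f (r 1) = b) by (unfold f; rewrite ixr; auto).
  assert (fr0 : f (r 0) = a) by (unfold f; rewrite ixr; auto).
  set (code := fun y => match excluded_middle_informative (exists n, y = r n) with
        | left p => S (proj1_sig (constructive_indefinite_description _ p))
        | right _ => 0 end).
  assert (code_inj : forall y1 y2, (y1 = b \/ exists n, y1 = r n) -> (y2 = b \/ exists n, y2 = r n) ->
             code y1 = code y2 -> y1 = y2).
  { intros y1 y2 H1 H2. unfold code.
    destruct (excluded_middle_informative (exists n, y1 = r n)) as [p1|p1];
    destruct (excluded_middle_informative (exists n, y2 = r n)) as [p2|p2]; intro E.
    - destruct (constructive_indefinite_description _ p1) as [n1 e1].
      destruct (constructive_indefinite_description _ p2) as [n2 e2]. simpl in E.
      injection E as E. rewrite e1, e2, E. reflexivity.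
    - discriminate.
    - discriminate.
    - destruct H1 as [H1|H1]; [|contradiction]. destruct H2 as [H2|H2]; [|contradiction]. congruence. }
  assert (rf_nat : inj (imset f) nat).
  { exists (fun s => code (proj1_sig s)). intros s1 s2 E. apply sig_ext.
    apply code_inj; auto; [apply imf; exact (proj2_sig s1)|apply imf; exact (proj2_sig s2)]. }
  assert (rg_nat : inj (imset g) nat).
  { exists (fun s => code (proj1_sig s)). intros s1 s2 E. apply sig_ext.
    apply code_inj; auto; [apply img; exact (proj2_sig s1)|apply img; exact (proj2_sig s2)]. }
  assert (nat_cf : inj nat (classes (preimrel alpha f))).
  { exists (fun n => mkcls (preimrel alpha f) (r (S (S n)))). intros n m E.
    apply mkcls_inv in E; [|apply preim_equiv; auto]. unfold preimrel in E.
    rewrite !fr2 in E. apply Hr in E. congruence. }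
  assert (nat_cg : inj nat (classes (preimrel alpha g))).
  { exists (fun n => mkcls (preimrel alpha g) (r n)). intros n m E.
    apply mkcls_inv in E; [|apply preim_equiv; auto]. unfold preimrel in E.
    rewrite !gr in E. apply Hr in E. congruence. }
  pose proof (c_le_r Ha f) as Cf. pose proof (c_le_r Ha g) as Cg.
  assert (E1 : equipotent (classes (preimrel alpha f)) nat) by (apply SB; eauto using inj_trans).
  assert (E2 : equipotent (imset f) nat) by (apply SB; eauto using inj_trans).
  assert (E3 : equipotent (classes (preimrel alpha g)) nat) by (apply SB; eauto using inj_trans).
  assert (E4 : equipotent (imset g) nat) by (apply SB; eauto using inj_trans).
  exists f, g. split; auto. split; auto. split.
  - apply (partJ Ha x0 Tf Tg). right. split; [|split].
    + eapply eqp_trans; [exact E1|apply eqp_sym; exact E2].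
    + eapply eqp_trans; [exact E2|apply eqp_sym; exact E4].
    + eapply eqp_trans; [exact E4|apply eqp_sym; exact E3].
  - intro D. apply (partD Ha x0 Tf Tg) in D. destruct D as [S|[_ [Sf _]]].
    + assert (im g b) by (apply S; exists (r 1); auto).
      destruct (img b H) as [_|[n Hn]].
      * destruct H as [x Hx]. unfold g in Hx. destruct (ix x) as [n|].
        -- apply (bnr n); auto.
        -- apply Hne; auto.
      * apply (bnr n); auto.
    + apply Hne. apply Sf; auto.
      * exists (r 0); auto.
      * exists (r 1); auto.
Qed.

Arguments partH {X alpha} Ha x0 {f g}.
Arguments seq_exists {X alpha} Ha a.
Arguments counterex {X alpha} Ha {a b} Hab Hne {r} Hr0 Hr.
Arguments sep_r_le_c {X alpha} Ha {f}.

Theorem theorem5p6 (X : Type) (alpha : X -> X -> Prop)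
  (hX : inhabited X) (halpha : Equivalence alpha) :
  (forall f g : X -> X, TXa alpha f -> TXa alpha g ->
     (GreenL alpha f g <-> same_im f g)
  /\ (GreenR alpha f g <->
        f = g \/ (same_ker f g /\ separates alpha (im f) /\ separates alpha (im g)))
  /\ (GreenH alpha f g <->
        f = g \/ (same_ker f g /\ same_im f g /\ separates alpha (im f)))
  /\ (GreenD alpha f g <->
        same_im f g \/
        (equipotent (imset f) (imset g) /\ separates alpha (im f) /\ separates alpha (im g)))
  /\ (GreenJ alpha f g <->
        same_im f g \/
        (equipotent (classes (preimrel alpha f)) (imset f)
         /\ equipotent (imset f) (imset g)
         /\ equipotent (imset g) (classes (preimrel alpha g)))))
  /\ ((forall f g : X -> X, TXa alpha f -> TXa alpha g ->
         (GreenD alpha f g <-> GreenJ alpha f g))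
      <-> (finite_type (classes alpha) \/ (forall x y, alpha x y <-> x = y))).
Proof.
  destruct hX as [x0]. split.
  - intros f g Tf Tg. split; [apply partL; auto|].
    split; [apply (partR halpha x0 Tf Tg)|].
    split; [apply (partH halpha x0 Tf Tg)|].
    split; [apply (partD halpha x0 Tf Tg)|apply (partJ halpha x0 Tf Tg)].
  - split.
    + intro H. destruct (classic (finite_type (classes alpha))) as [F|F]; [left; auto|right].
      intros x y; split; [|intro; subst; reflexivity].
      intro Hxy. apply NNPP; intro Hne.
      destruct (seq_exists halpha x F) as [r [Hr0 Hr]].
      destruct (counterex halpha Hxy Hne Hr0 Hr) as [f [g [Tf [Tg [J ND]]]]].
      apply ND. apply H; auto.
    + intros Hc f g Tf Tg. rewrite (partD halpha x0 Tf Tg), (partJ halpha x0 Tf Tg). split.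
      * intros [S|[E [Sf Sg]]]; [left; auto|right]. split; [|split]; auto.
        -- apply eqp_sym, sep_r_le_c; auto.
        -- apply sep_r_le_c; auto.
      * intros [S|[E1 [E2 E3]]]; [left; auto|right]. split; auto.
        destruct Hc as [F|D].
        -- split; eapply fin_sep; eauto. apply eqp_sym; auto.
        -- split; intros a b _ _ Hab; apply D; auto.
Qed.
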